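(* Let $m\ge 4$, $t$, $g$ be positive integers with $t\ge g+1$, and put $\alpha=(t-1)-g$. Consider a bin configuration of the game $G(m,t,g)$ in which every current bin load is at most $t-1$. Let $A,B$ be two distinct bins, and define: - $s$ as the sum of the loads of all bins other than $A$ and $B$; - $r=(m-1)g-\alpha-s$; - $o=t-r$. Suppose that all of the following hold: - $r\le t-1$; - the load of $A$ is at most $\alpha$; - the load of $A$ is strictly greater than $(m-1)g-\alpha-o-s$. Then Algorithm wins from this configuration.
   Context: Bin stretching game $G(m,t,g)$: there are $m$ bins. In each round Adversary presents an item of positive integer size, and Algorithm then irrevocably places it into one of the $m$ bins. The load of a bin is the total size of the items in it. A bin configuration consists of: - the current loads $L_1,\dots,L_m$ of the bins, and - the multiset $\mathcal I$ of items presented so far, placed so that the bins have exactly these loads. ''Algorithm wins from this configuration'' means the following. There is an online rule which, given the configuration and the items presented so far, assigns each newly presented item to a bin. This rule must guarantee: for every finite sequence $e_1,\dots,e_j$ of further positive-integer items such that the multiset $\mathcal I\cup\{e_1,\dots,e_j\}$ can be partitioned into $m$ parts each of total size at most $g$, every bin load is at most $t-1$ after these items are placed. *)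

(* Defs.v *)
From mathcomp Require Import all_boot all_order all_algebra.
Set Implicit Arguments. Unset Strict Implicit. Unset Printing Implicit Defensive.

Definition packable (m g : nat) (s : seq nat) : Prop :=
  exists f : 'I_(size s) -> 'I_m,
    forall i : 'I_m, \sum_(k < size s | f k == i) nth 0 s k <= g.

Definition bin_config (m : nat) (L : 'I_m -> nat) (I : seq nat) : Prop :=
  all (fun x => 0 < x) I /\
  exists f : 'I_(size I) -> 'I_m,
    forall i : 'I_m, \sum_(k < size I | f k == i) nth 0 I k = L i.

(* An online rule: given the list of newly presented items e_1..e_k
   (the last one, e_k, being the current item), choose a bin for e_k. *)
Definition online_rule (m : nat) := seq nat -> 'I_m.

Definition final_load (m : nat) (L : 'I_m -> nat) (rule : online_rule m)
    (es : seq nat) (i : 'I_m) : nat :=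
  L i + \sum_(k < size es | rule (take k.+1 es) == i) nth 0 es k.

Definition alg_wins (m t g : nat) (L : 'I_m -> nat) (I : seq nat) : Prop :=
  exists rule : online_rule m,
    forall es : seq nat, all (fun x => 0 < x) es ->
      packable m g (I ++ es) ->
      forall i : 'I_m, final_load L rule es i <= t - 1.

(* Main.v *)
Require Import Defs.
From mathcomp Require Import all_boot all_order all_algebra.
From mathcomp Require Import zify.
Import GRing.Theory Num.Theory.
Set Implicit Arguments. Unset Strict Implicit.

Definition goB (thr : int) (c : nat) (ab : nat * nat) (x : nat) : bool :=
  (thr <= Posz ab.1)%R || (~~ (thr <= Posz ab.2)%R && (ab.2 + x <= c)).

Definition stp (thr : int) (c : nat) (ab : nat * nat) (x : nat) : nat * nat :=
  if goB thr c ab x then (ab.1, ab.2 + x) else (ab.1 + x, ab.2).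

Definition myrule m (A B : 'I_m) thr c (z : nat * nat) : online_rule m :=
  fun es => match rev es with
  | [::] => A
  | x :: rp => if goB thr c (foldl (stp thr c) z (rev rp)) x then B else A
  end.

Lemma rule_rcons m (A B : 'I_m) thr c z p x :
  myrule A B thr c z (rcons p x) =
  if goB thr c (foldl (stp thr c) z p) x then B else A.
Proof. by rewrite /myrule rev_rcons revK. Qed.

Lemma sum_rcons m (rule : online_rule m) es x i :
  \sum_(k < size (rcons es x) | rule (take k.+1 (rcons es x)) == i)
      nth 0 (rcons es x) k =
  \sum_(k < size es | rule (take k.+1 es) == i) nth 0 es k +
  (if rule (rcons es x) == i then x else 0).
Proof.
rewrite size_rcons big_mkcond big_ord_recr /= [in RHS]big_mkcond /=.
congr (_ + _).
  apply: eq_bigr => k _ /=.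
  have hk : k.+1 <= size es by exact: ltn_ord.
  by rewrite -cats1 takel_cat // nth_cat ltn_ord.
rewrite take_oversize ?size_rcons // nth_rcons ltnn eqxx.
by case: ifP.
Qed.

Lemma final_loadE m (L : 'I_m -> nat) (A B : 'I_m) thr c (hAB : A != B) es i :
  final_load L (myrule A B thr c (L A, L B)) es i =
  if i == A then (foldl (stp thr c) (L A, L B) es).1
  else if i == B then (foldl (stp thr c) (L A, L B) es).2 else L i.
Proof.
elim/last_ind: es => [|es x IH].
  rewrite /final_load /= big_ord0 addn0.
  by case: ifP => [/eqP->|_] //; case: ifP => [/eqP->|_].
rewrite /final_load sum_rcons addnA -/(final_load _ _ _ _) IH rule_rcons foldl_rcons.
rewrite /stp.
have hBA : (B == A) = false by apply/negbTE; rewrite eq_sym.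
have hAB' : (A == B) = false by apply/negbTE.
case: (eqVneq i A) => [->|hiA].
  by case: (goB _ _ _ _) => /=; rewrite ?eqxx ?hBA ?addn0.
rewrite ?(negbTE hiA).
case: (eqVneq i B) => [->|hiB].
  by case: (goB _ _ _ _) => /=; rewrite ?eqxx ?hAB' ?addn0.
rewrite ?(negbTE hiB).
by case: (goB _ _ _ _) => /=; rewrite ?addn0 //; [rewrite eq_sym (negbTE hiB) | rewrite eq_sym (negbTE hiA)]; rewrite addn0.

Qed.

Definition Inv (thr : int) (c alpha : nat) (ab : nat * nat) : Prop :=
  ab.1 <= c /\ ab.2 <= c /\
  ((thr <= Posz ab.1)%R \/ (thr <= Posz ab.2)%R \/
   (ab.1 <= alpha /\ (thr + thr < Posz ab.1 + Posz c + 1)%R)).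

Lemma inv_step thr c alpha g ab x : c = alpha + g -> x <= g ->
  Inv thr c alpha ab -> (Posz (ab.1 + ab.2 + x) <= thr + Posz c)%R ->
  Inv thr c alpha (stp thr c ab x).
Proof.
case: ab => a b; rewrite /Inv /= => hc hx [ha [hb hd]] hs.
rewrite /stp /goB /Inv /=.
have [h1|h1] := boolP (thr <= Posz a)%R => /=; first by split; [lia | split; [lia | left]].
have [h2|h2] := boolP (thr <= Posz b)%R => /=; first by split; [lia | split; [lia | right; left]].
case: ifP => h3 /=; lia.
Qed.

Lemma inv_all thr c alpha g z es : c = alpha + g -> all (fun x => x <= g) es ->
  Inv thr c alpha z -> (Posz (z.1 + z.2 + sumn es) <= thr + Posz c)%R ->
  Inv thr c alpha (foldl (stp thr c) z es) /\
  (foldl (stp thr c) z es).1 + (foldl (stp thr c) z es).2 = z.1 + z.2 + sumn es.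
Proof.
move=> hc; elim/last_ind: es => [|es x IH] /=; first by rewrite addn0.
rewrite all_rcons foldl_rcons -cats1 sumn_cat /= addn0 => /andP [hx hall] hz hs.
have [hI hsum] := IH hall hz ltac:(lia).
split.
  apply: inv_step hc hx hI _; lia.
set w := foldl _ _ _ in hsum *; rewrite /stp; case: ifP => _ /=; lia.
Qed.

Lemma sumn_ord (s : seq nat) : sumn s = \sum_(k < size s) nth 0 s k.
Proof. by rewrite sumnE (big_nth 0) big_mkord. Qed.

Lemma packable_sum m g s : packable m g s -> sumn s <= m * g.
Proof.
case=> f hf; rewrite sumn_ord (partition_big f predT) //=.
rewrite -[m in m * g]card_ord -sum_nat_const.
by apply: leq_sum => i _; exact: hf.
Qed.

Lemma packable_item m g s : packable m g s -> all (fun x => x <= g) s.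
Proof.
case=> f hf; apply/(all_nthP 0) => k hk.
apply: leq_trans (hf (f (Ordinal hk))).
by rewrite (bigD1 (Ordinal hk)) //= leq_addr.
Qed.

Lemma config_sum m (L : 'I_m -> nat) I : bin_config L I -> sumn I = \sum_i L i.
Proof.
case=> _ [f hf]; rewrite sumn_ord (partition_big f predT) //=.
by apply: eq_bigr => i _; exact: hf.
Qed.

Theorem mainTheorem3 (m t g : nat) (L : 'I_m -> nat) (I : seq nat) (A B : 'I_m) :
  4 <= m -> 0 < t -> 0 < g -> g + 1 <= t ->
  bin_config L I ->
  (forall i : 'I_m, L i <= t - 1) ->
  A != B ->
  let alpha : int := (Posz t - 1 - Posz g)%R in
  let s : int := Posz (\sum_(i : 'I_m | (i != A) && (i != B)) L i) in
  let r : int := ((Posz m - 1) * Posz g - alpha - s)%R in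
  let o : int := (Posz t - r)%R in
  (r <= Posz t - 1)%R ->
  (Posz (L A) <= alpha)%R ->
  ((Posz m - 1) * Posz g - alpha - o - s < Posz (L A))%R ->
  @alg_wins m t g L I.
Proof.
move=> hm ht hg htg hconf hL hAB alpha s r o hr hLA hLAo.
have hsumI := config_sum hconf.
have hBA : B != A by rewrite eq_sym.
rewrite (bigD1 A) //= (bigD1 B) //= in hsumI.
set S := \sum_(i | _) L i in hsumI.
have hG : ((Posz m - 1) * Posz g = Posz (m * g) - Posz g)%R.
  by rewrite mulrBl mul1r PoszM.
exists (myrule A B r (t - 1) (L A, L B)).
move=> es _ hp i.
rewrite final_loadE //.
have hpk := packable_sum hp.
have hall : all (fun x => x <= g) es.
  by move: (packable_item hp); rewrite all_cat => /andP [].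
rewrite sumn_cat hsumI in hpk.
have hc : t - 1 = (t - 1 - g) + g by lia.
have ealpha : alpha = (Posz t - 1 - Posz g)%R := erefl.
have es_ : s = Posz S := erefl.
have er : r = (Posz (m * g) - Posz g - alpha - s)%R by rewrite -hG.
have eo : o = (Posz t - r)%R := erefl.
rewrite -/r -/alpha in hLAo.
have hz : Inv r (t - 1) (t - 1 - g) (L A, L B).
  rewrite /Inv /=; split; first exact: hL.
  split; first exact: hL.
  right; right; split; lia.
have hs : (Posz ((L A, L B).1 + (L A, L B).2 + sumn es) <= r + Posz (t - 1))%R.
  rewrite /=; lia.
have [[h1 [h2 _]] _] := inv_all hc hall hz hs.
case: ifP => // _; case: ifP => // _.
Qed.
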